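(* Let $\varphi:[0,1)\to(0,\infty)$ be continuous and regularly varying at $1$ with index $\rho>0$, and let $\kappa(t):=1$, $t\in[0,1)$. Let $c_0:=0<c_1<c_2<\dots<1$ be such that $\|\mathbb 1_{(c_n,1)}\kappa\|^2=2^{-n}\|\kappa\|^2$, set $J_n=(c_{n-1},c_n)$ and $\omega_n=\|\mathbb 1_{J_n}\kappa\|\cdot\|\mathbb 1_{J_n}\varphi\|$ (norms in $L^2(0,1)$). Then \[ \omega_n\asymp 2^{-n}\varphi(1-2^{-n}), \] i.e. there exist $C_1,C_2>0$ with $C_1\,2^{-n}\varphi(1-2^{-n})\le\omega_n\le C_2\,2^{-n}\varphi(1-2^{-n})$ for all $n\in\mathbb N$.
   Context: A measurable function $\psi:[1,\infty)\to(0,\infty)$ is regularly varying with index $\rho_\psi\in\mathbb R$ if $\lim_{x\to\infty}\psi(kx)/\psi(x)=k^{\rho_\psi}$ for every $k>0$. A function $\varphi:[0,1)\to(0,\infty)$ is regularly varying at $1$ with index $\rho$ if $\psi(x):=\varphi\big(\frac{x-1}{x}\big)$, $x\in[1,\infty)$, is regularly varying with index $\rho$. *)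

(* Defs.v *)
From Stdlib Require Import Reals.
From Coquelicot Require Import Coquelicot.
Open Scope R_scope.

Definition psi_of (phi : R -> R) (x : R) : R := phi ((x - 1) / x).

Definition regularly_varying (psi : R -> R) (rho : R) : Prop :=
  forall k : R, 0 < k ->
    is_lim (fun x => psi (k * x) / psi x) p_infty (Rpower k rho).

Definition regularly_varying_at1 (phi : R -> R) (rho : R) : Prop :=
  regularly_varying (psi_of phi) rho.

Definition continuous_on_01 (phi : R -> R) : Prop :=
  (forall t, 0 < t < 1 -> continuous phi t) /\
  filterlim phi (at_right 0) (locally (phi 0)).

(* || 1_{(a,b)} f ||_{L^2(0,1)}  for 0 <= a <= b <= 1 *)
Definition L2norm_ind (a b : R) (f : R -> R) : R :=
  sqrt (RInt (fun t => (f t) ^ 2) a b).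

(* Main.v *)
Require Import Defs.
From Stdlib Require Import Reals Lra Lia Classical ClassicalEpsilon.
From Coquelicot Require Import Coquelicot.
Open Scope R_scope.

Lemma cont_pt_eps (f : R -> R) x :
  continuity_pt f x <-> forall eps, 0 < eps -> exists d, 0 < d /\
     forall y, Rabs (y - x) < d -> Rabs (f y - f x) < eps.
Proof.
  unfold continuity_pt, continue_in, limit1_in, limit_in; simpl; unfold R_dist.
  split.
  - intros H eps He. destruct (H eps He) as [d [Hd Hd']]. exists d; split; auto.
    intros y Hy. destruct (Req_dec y x) as [->|Hne].
    + rewrite Rminus_diag, Rabs_R0; auto.
    + apply Hd'. split; auto. unfold D_x, no_cond; auto.
  - intros H eps He. destruct (H eps He) as [d [Hd Hd']]. exists d; split; auto.
    intros y [_ Hy]. auto.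
Qed.

Definition gext (phi : R -> R) (x : R) : R :=
  if Rle_dec x 0 then phi 0 else phi x.

Lemma gext_eq phi x : 0 <= x -> gext phi x = phi x.
Proof. intros Hx; unfold gext; destruct (Rle_dec x 0) as [h|h]; [|reflexivity]. replace x with 0 by lra; reflexivity. Qed.

Lemma gext_pos phi : (forall t, 0 <= t < 1 -> 0 < phi t) -> forall x, x < 1 -> 0 < gext phi x.
Proof. intros H x Hx; unfold gext; destruct (Rle_dec x 0); apply H; split; lra. Qed.

Lemma ball_R (x e y : R) : ball x e y <-> Rabs (y - x) < e.
Proof. reflexivity. Qed.

Lemma gext_cont phi :
  (forall t, 0 < t < 1 -> continuous phi t) ->
  filterlim phi (at_right 0) (locally (phi 0)) ->
  forall x, x < 1 -> continuity_pt (gext phi) x.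
Proof.
  intros Hc H0 x Hx. apply cont_pt_eps. intros eps He.
  destruct (Rlt_le_dec 0 x) as [Hxp|Hxn].
  - assert (Hcx := proj2 (continuity_pt_filterlim _ _) (Hc x (conj Hxp Hx))).
    apply cont_pt_eps with (eps := eps) in Hcx; auto.
    destruct Hcx as [d [Hd Hd']]. exists (Rmin d x). split. apply Rmin_pos; auto.
    intros y Hy. assert (Hy1 : Rabs (y - x) < d) by (eapply Rlt_le_trans; [exact Hy|apply Rmin_l]).
    assert (Hy2 : Rabs (y - x) < x) by (eapply Rlt_le_trans; [exact Hy|apply Rmin_r]).
    assert (0 < y) by (apply Rabs_def2 in Hy2; lra).
    rewrite !gext_eq by lra. auto.
  - destruct (Rlt_le_dec x 0) as [Hxn'|Hx0].
    + exists (-x). split. lra. intros y Hy. apply Rabs_def2 in Hy.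
      unfold gext. destruct (Rle_dec y 0); [|lra]. destruct (Rle_dec x 0); [|lra].
      rewrite Rminus_diag, Rabs_R0; auto.
    + assert (x = 0) by lra. subst x.
      assert (Hb := H0 (ball (phi 0) eps) (locally_ball (phi 0) (mkposreal eps He))).
      destruct Hb as [d Hd]. exists d. split. apply cond_pos.
      intros y Hy. unfold gext at 2. destruct (Rle_dec 0 0); [|lra].
      unfold gext. destruct (Rle_dec y 0).
      * rewrite Rminus_diag, Rabs_R0; auto.
      * apply Hd. apply ball_R. auto. lra.
Qed.

Lemma baire_R (E : nat -> R -> Prop) :
  (forall N x, ~ E N x -> exists d, 0 < d /\ forall y, Rabs (y - x) < d -> ~ E N y) ->
  (forall x, exists N, E N x) ->
  exists N a b, a < b /\ forall x, a <= x <= b -> E N x.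
Proof.
  intros Hop Hcov. apply NNPP; intro Hno.
  assert (Hstep : forall N (p : R*R), exists q : R*R, fst p < snd p ->
     (fst p <= fst q /\ fst q < snd q /\ snd q <= snd p /\
      forall x, fst q <= x <= snd q -> ~ E N x)).
  { intros N [a b]. simpl. destruct (Rlt_dec a b) as [Hab|Hab];
      [|exists (a,b); intro; lra].
    assert (Hex : exists x, a + (b-a)/3 <= x <= b - (b-a)/3 /\ ~ E N x).
    { apply NNPP; intro H. apply Hno. exists N, (a + (b-a)/3), (b - (b-a)/3).
      split. lra. intros x Hx. apply NNPP; intro. apply H; eauto. }
    destruct Hex as [x [Hx HnE]]. destruct (Hop N x HnE) as [d [Hd Hd']].
    set (e := Rmin (d/2) ((b-a)/3)).
    assert (He1 : e <= d/2) by apply Rmin_l.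
    assert (He2 : e <= (b-a)/3) by apply Rmin_r.
    assert (He0 : 0 < e) by (apply Rmin_pos; lra).
    exists (x - e, x + e). intros _. simpl.
    split; [lra|split;[lra|split;[lra|]]].
    intros y Hy. apply Hd'. apply Rabs_def1; lra. }
  pose (f := fun N p => proj1_sig (constructive_indefinite_description _ (Hstep N p))).
  assert (Hf : forall N p, fst p < snd p ->
     (fst p <= fst (f N p) /\ fst (f N p) < snd (f N p) /\ snd (f N p) <= snd p /\
      forall x, fst (f N p) <= x <= snd (f N p) -> ~ E N x)).
  { intros N p. exact (proj2_sig (constructive_indefinite_description _ (Hstep N p))). }
  pose (s := fix s (n : nat) : R*R := match n with O => (0,1) | S k => f k (s k) end).
  assert (Hlt : forall n, fst (s n) < snd (s n)).
  { induction n. simpl; lra. simpl. apply Hf; auto. }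
  assert (Hs : forall n, fst (s n) <= fst (s (S n)) /\ snd (s (S n)) <= snd (s n) /\
      forall x, fst (s (S n)) <= x <= snd (s (S n)) -> ~ E n x).
  { intros n. destruct (Hf n (s n) (Hlt n)) as [h1 [h2 [h3 h4]]]. simpl.
    split; auto. }
  assert (Hmono : forall n m, (n <= m)%nat -> fst (s n) <= fst (s m) /\ snd (s m) <= snd (s n)).
  { intros n m Hnm. induction Hnm. lra. destruct (Hs m) as [h1 [h2 _]]. lra. }
  assert (Hab : forall n m, fst (s n) <= snd (s m)).
  { intros n m. destruct (Hmono n (max n m)) as [h1 _]. lia.
    destruct (Hmono m (max n m)) as [_ h2]. lia. specialize (Hlt (max n m)). lra. }
  destruct (completeness (fun x => exists n, x = fst (s n))) as [l [Hl1 Hl2]].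
  { exists (snd (s O)). intros x [n ->]. apply Hab. }
  { exists (fst (s O)). eauto. }
  destruct (Hcov l) as [N HN].
  destruct (Hs N) as [_ [_ H3]]. apply (H3 l); auto. split.
  - apply Hl1. eauto.
  - apply Hl2. intros x [n ->]. apply Hab.
Qed.

Lemma nat_above r : exists N : nat, r < INR N.
Proof.
  destruct (archimed r) as [h _]. exists (Z.to_nat (up r)).
  destruct (Z.le_gt_cases 0 (up r)) as [Hz|Hz].
  - rewrite INR_IZR_INZ, Znat.Z2Nat.id; auto.
  - apply IZR_lt in Hz. pose proof (pos_INR (Z.to_nat (up r))). lra.
Qed.

Definition Hf (phi : R -> R) (y : R) := ln (gext phi (1 - exp (- y))).

Lemma exp_neg_le1 y : 0 <= y -> exp (- y) <= 1.
Proof. intros. rewrite <- exp_0. destruct (Req_dec y 0). subst; rewrite Ropp_0; lra.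
  left; apply exp_increasing; lra. Qed.

Lemma Hf_cont phi :
  (forall t, 0 < t < 1 -> continuous phi t) ->
  filterlim phi (at_right 0) (locally (phi 0)) ->
  (forall t, 0 <= t < 1 -> 0 < phi t) ->
  forall y, continuity_pt (Hf phi) y.
Proof.
  intros Hc H0 Hp y. unfold Hf.
  assert (Hin : continuity_pt (fun y => 1 - exp (- y)) y).
  { apply continuity_pt_minus. apply continuity_pt_const; intros ? ?; auto.
    apply (continuity_pt_comp Ropp exp). apply continuity_pt_opp, continuity_pt_id.
    apply derivable_continuous_pt, derivable_pt_exp. }
  pose proof (exp_pos (- y)).
  apply (continuity_pt_comp (fun y => 1 - exp (- y)) (fun z => ln (gext phi z))); auto.
  apply (continuity_pt_comp (gext phi) ln).
  apply gext_cont; auto; lra.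
  apply continuity_pt_filterlim. apply continuous_ln. apply gext_pos; auto; lra.
Qed.

Lemma Hf_psi phi y : 0 <= y -> Hf phi y = ln (psi_of phi (exp y)).
Proof.
  intros Hy. unfold Hf, psi_of. rewrite gext_eq.
  - f_equal. f_equal. rewrite exp_Ropp. field. apply Rgt_not_eq, exp_pos.
  - pose proof (exp_neg_le1 y Hy); lra.
Qed.

Lemma psi_exp_pos phi z : (forall t, 0 <= t < 1 -> 0 < phi t) -> 0 <= z ->
  0 < psi_of phi (exp z).
Proof.
  intros Hp Hz. unfold psi_of.
  replace ((exp z - 1) / exp z) with (1 - exp (- z)).
  - apply Hp. pose proof (exp_neg_le1 z Hz). pose proof (exp_pos (- z)). split; lra.
  - rewrite exp_Ropp. field. apply Rgt_not_eq, exp_pos.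
Qed.

Lemma Hf_ptbound phi rho :
  (forall t, 0 <= t < 1 -> 0 < phi t) ->
  regularly_varying_at1 phi rho ->
  forall u, exists N : nat, forall y, INR N <= y -> Rabs (Hf phi (y + u) - Hf phi y) <= INR N.
Proof.
  intros Hp Hreg u.
  set (k := exp u). assert (Hk : 0 < k) by apply exp_pos.
  set (l := Rpower k rho). assert (Hl : 0 < l) by (unfold l, Rpower; apply exp_pos).
  pose proof (proj2 (is_lim_spec _ _ _) (Hreg k Hk) (mkposreal (l/2) ltac:(lra))) as HM.
  simpl in HM. destruct HM as [M HM].
  set (B := Rabs (ln (l/2)) + Rabs (ln (3*l/2))).
  destruct (nat_above (Rabs M + Rabs u + B)) as [N HN].
  exists N. intros y Hy.
  pose proof (Rabs_pos M). pose proof (Rabs_pos u). pose proof (Rabs_pos (ln (l/2))).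
  pose proof (Rabs_pos (ln (3*l/2))). pose proof (Rle_abs M). pose proof (Rle_abs (-u)).
  rewrite Rabs_Ropp in *.
  assert (Hy0 : 0 <= y) by (unfold B in HN; lra).
  assert (Hyu : 0 <= y + u) by (unfold B in HN; lra).
  assert (HMy : M < exp y) by (pose proof (exp_ineq1_le y); unfold B in HN; lra).
  specialize (HM _ HMy).
  rewrite !Hf_psi by auto.
  replace (k * exp y) with (exp (y + u)) in HM by (unfold k; rewrite exp_plus; ring).
  assert (P1 : 0 < psi_of phi (exp (y + u))) by (apply psi_exp_pos; auto).
  assert (P2 : 0 < psi_of phi (exp y)) by (apply psi_exp_pos; auto).
  rewrite <- ln_div by auto.
  set (r := psi_of phi (exp (y + u)) / psi_of phi (exp y)) in *.
  apply Rabs_def2 in HM.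
  assert (Hr : 0 < r) by (unfold r; apply Rdiv_lt_0_compat; auto).
  fold l in HM. assert (L1 : ln (l/2) < ln r) by (apply ln_increasing; lra).
  assert (L2 : ln r < ln (3*l/2)) by (apply ln_increasing; lra).
  pose proof (Rle_abs (ln (3*l/2))). pose proof (Rle_abs (- ln (l/2))). rewrite Rabs_Ropp in *.
  apply Rabs_le. unfold B in HN. lra.
Qed.

Lemma Hf_unif phi rho :
  (forall t, 0 < t < 1 -> continuous phi t) ->
  filterlim phi (at_right 0) (locally (phi 0)) ->
  (forall t, 0 <= t < 1 -> 0 < phi t) ->
  regularly_varying_at1 phi rho ->
  exists Z Bd, forall z v, Z <= z -> 0 <= v <= 1 -> Rabs (Hf phi (z + v) - Hf phi z) <= Bd.
Proof.
  intros Hc H0 Hp Hreg.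
  set (E := fun (N : nat) u => forall y, INR N <= y -> Rabs (Hf phi (y + u) - Hf phi y) <= INR N).
  destruct (baire_R E) as [N [a [b [Hab HE]]]].
  - intros N x HnE. unfold E in HnE.
    apply not_all_ex_not in HnE. destruct HnE as [y Hy].
    apply imply_to_and in Hy. destruct Hy as [Hy1 Hy2]. apply Rnot_le_lt in Hy2.
    pose proof (proj1 (cont_pt_eps _ _) (Hf_cont phi Hc H0 Hp (y + x))
       (Rabs (Hf phi (y + x) - Hf phi y) - INR N) ltac:(lra)) as [d [Hd Hd']].
    exists d. split; auto. intros x' Hx' HE'. specialize (HE' y Hy1).
    specialize (Hd' (y + x')). replace (y + x' - (y + x)) with (x' - x) in Hd' by ring.
    specialize (Hd' Hx').
    pose proof (Rabs_triang (Hf phi (y + x') - Hf phi y) (Hf phi (y + x) - Hf phi (y + x'))).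
    replace (Hf phi (y + x') - Hf phi y + (Hf phi (y + x) - Hf phi (y + x')))
      with (Hf phi (y + x) - Hf phi y) in H by ring.
    rewrite <- Rabs_Ropp in Hd'. replace (- (Hf phi (y + x') - Hf phi (y + x))) with
      (Hf phi (y + x) - Hf phi (y + x')) in Hd' by ring. lra.
  - intros u. destruct (Hf_ptbound phi rho Hp Hreg u) as [N HN]. exists N. exact HN.
  - set (Z := INR N + Rabs a). set (dl := b - a).
    assert (Hstep : forall z v, Z <= z -> 0 <= v <= dl -> Rabs (Hf phi (z + v) - Hf phi z) <= 2 * INR N).
    { intros z v Hz Hv. pose proof (Rle_abs a).
      assert (Hy : INR N <= z - a) by (unfold Z in Hz; lra).
      pose proof (HE a ltac:(lra) _ Hy) as E1.
      pose proof (HE (a + v) ltac:(unfold dl in Hv; lra) _ Hy) as E2.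
      replace (z - a + a) with z in E1 by ring.
      replace (z - a + (a + v)) with (z + v) in E2 by ring.
      pose proof (Rabs_triang (Hf phi (z + v) - Hf phi (z - a)) (Hf phi (z - a) - Hf phi z)) as T.
      rewrite <- Rabs_Ropp in E1.
      replace (- (Hf phi z - Hf phi (z - a))) with (Hf phi (z - a) - Hf phi z) in E1 by ring.
      replace (Hf phi (z + v) - Hf phi (z - a) + (Hf phi (z - a) - Hf phi z))
        with (Hf phi (z + v) - Hf phi z) in T by ring. lra. }
    assert (Hchain : forall k z v, Z <= z -> 0 <= v <= INR k * dl ->
              Rabs (Hf phi (z + v) - Hf phi z) <= INR k * (2 * INR N)).
    { induction k; intros z v Hz Hv.
      - simpl in *. replace v with 0 by lra. rewrite Rplus_0_r, Rminus_diag, Rabs_R0. lra.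
      - pose proof (pos_INR N). pose proof (pos_INR k). rewrite S_INR in *.
        destruct (Rle_dec v (INR k * dl)) as [Hle|Hgt].
        + pose proof (IHk z v Hz ltac:(lra)). nra.
        + apply Rnot_le_lt in Hgt.
          pose proof (IHk z (INR k * dl) Hz ltac:(unfold dl in *; nra)) as I1.
          pose proof (Hstep (z + INR k * dl) (v - INR k * dl) ltac:(unfold dl in *; nra)
                        ltac:(unfold dl in *; nra)) as I2.
          replace (z + INR k * dl + (v - INR k * dl)) with (z + v) in I2 by ring.
          pose proof (Rabs_triang (Hf phi (z + v) - Hf phi (z + INR k * dl))
                         (Hf phi (z + INR k * dl) - Hf phi z)) as T.
          replace (Hf phi (z + v) - Hf phi (z + INR k * dl) + (Hf phi (z + INR k * dl) - Hf phi z))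
            with (Hf phi (z + v) - Hf phi z) in T by ring. lra. }
    destruct (nat_above (/ dl)) as [k Hk].
    exists Z, (INR k * (2 * INR N)). intros z v Hz Hv. apply Hchain; auto.
    assert (0 < dl) by (unfold dl; lra).
    assert (1 < INR k * dl).
    { apply Rmult_lt_compat_r with (r := dl) in Hk; auto. rewrite Rinv_l in Hk; lra. }
    lra.
Qed.

Lemma exp_mono x y : x <= y -> exp x <= exp y.
Proof. intros [H|H]. left; apply exp_increasing; auto. subst; lra. Qed.

Lemma ln2_bounds : 0 < ln 2 < 1.
Proof.
  pose proof ln_lt_2. split. lra.
  rewrite <- (ln_exp 1). apply ln_increasing. lra.
  pose proof (exp_ineq1 1 ltac:(lra)). lra.
Qed.

Lemma Hf_all phi rho :
  (forall t, 0 < t < 1 -> continuous phi t) ->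
  filterlim phi (at_right 0) (locally (phi 0)) ->
  (forall t, 0 <= t < 1 -> 0 < phi t) ->
  regularly_varying_at1 phi rho ->
  exists K, 0 <= K /\ forall n : nat, (1 <= n)%nat -> forall z,
    INR (n - 1) * ln 2 <= z <= INR n * ln 2 ->
    Rabs (Hf phi z - Hf phi (INR n * ln 2)) <= K.
Proof.
  intros Hc H0 Hp Hreg.
  destruct (Hf_unif phi rho Hc H0 Hp Hreg) as [Z [Bd HB]].
  assert (HBd : 0 <= Bd).
  { specialize (HB Z 0 (Rle_refl _) ltac:(lra)). rewrite Rplus_0_r, Rminus_diag, Rabs_R0 in HB. auto. }
  set (Z' := Rmax Z 0 + 1).
  assert (HZ1 : Z <= Rmax Z 0) by apply Rmax_l.
  assert (HZ2 : 0 <= Rmax Z 0) by apply Rmax_r.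
  assert (Hcont : forall c, 0 <= c <= Z' -> continuity_pt (Hf phi) c).
  { intros; apply Hf_cont; auto. }
  destruct (continuity_ab_maj (Hf phi) 0 Z' ltac:(unfold Z'; lra) Hcont) as [Mx [HMx _]].
  destruct (continuity_ab_min (Hf phi) 0 Z' ltac:(unfold Z'; lra) Hcont) as [mx [Hmx _]].
  assert (HA : 0 <= Hf phi Mx - Hf phi mx).
  { specialize (HMx 0 ltac:(unfold Z'; lra)). specialize (Hmx 0 ltac:(unfold Z'; lra)). lra. }
  exists (Bd + (Hf phi Mx - Hf phi mx)). split. lra.
  intros n Hn z Hz. pose proof ln2_bounds.
  assert (Hn1 : INR (n - 1) = INR n - 1) by (rewrite minus_INR by auto; simpl; ring).
  rewrite Hn1 in Hz.
  assert (1 <= INR n) by (apply (le_INR 1 n) in Hn; simpl in Hn; lra).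
  destruct (Rle_dec (INR n * ln 2) Z') as [Hle|Hgt].
  - assert (0 <= (INR n - 1) * ln 2) by nra.
    pose proof (HMx z ltac:(lra)). pose proof (Hmx z ltac:(lra)).
    pose proof (HMx (INR n * ln 2) ltac:(nra)). pose proof (Hmx (INR n * ln 2) ltac:(nra)).
    apply Rabs_le. lra.
  - apply Rnot_le_lt in Hgt.
    specialize (HB z (INR n * ln 2 - z) ltac:(unfold Z' in Hgt; nra) ltac:(nra)).
    replace (z + (INR n * ln 2 - z)) with (INR n * ln 2) in HB by ring.
    rewrite Rabs_minus_sym. lra.
Qed.

Lemma ln_inv_pow2 n : ln (/ 2 ^ n) = - (INR n * ln 2).
Proof. rewrite ln_Rinv by (apply pow_lt; lra). rewrite ln_pow by lra. ring. Qed.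

Lemma inv_pow2_le1 n : 0 < / 2 ^ n <= 1.
Proof.
  assert (1 <= 2 ^ n) by (apply pow_R1_Rle; lra).
  split. apply Rinv_0_lt_compat; lra.
  rewrite <- Rinv_1. apply Rinv_le_contravar; lra.
Qed.

Lemma phi_ratio phi rho :
  (forall t, 0 < t < 1 -> continuous phi t) ->
  filterlim phi (at_right 0) (locally (phi 0)) ->
  (forall t, 0 <= t < 1 -> 0 < phi t) ->
  regularly_varying_at1 phi rho ->
  exists K, 0 <= K /\ forall n : nat, (1 <= n)%nat -> forall t,
    1 - / 2 ^ (n - 1) <= t <= 1 - / 2 ^ n ->
    phi t <= exp K * phi (1 - / 2 ^ n) /\ phi (1 - / 2 ^ n) <= exp K * phi t.
Proof.
  intros Hc H0 Hp Hreg.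
  destruct (Hf_all phi rho Hc H0 Hp Hreg) as [K [HK HKb]].
  exists K. split; auto. intros n Hn t Ht.
  pose proof (inv_pow2_le1 n). pose proof (inv_pow2_le1 (n - 1)).
  assert (H1t : 0 < 1 - t) by lra.
  specialize (HKb n Hn (- ln (1 - t))).
  assert (Ez : Hf phi (- ln (1 - t)) = ln (phi t)).
  { unfold Hf. rewrite Ropp_involutive, exp_ln by auto.
    replace (1 - (1 - t)) with t by ring. rewrite gext_eq by lra. auto. }
  assert (En : Hf phi (INR n * ln 2) = ln (phi (1 - / 2 ^ n))).
  { unfold Hf. rewrite exp_Ropp. replace (exp (INR n * ln 2)) with (2 ^ n).
    rewrite gext_eq by lra. auto.
    rewrite <- Rpower_pow by lra. reflexivity. }
  rewrite Ez, En in HKb.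
  assert (Hr1 : ln (1 - t) <= ln (/ 2 ^ (n - 1))) by (apply ln_le; lra).
  assert (Hr2 : ln (/ 2 ^ n) <= ln (1 - t)) by (apply ln_le; lra).
  rewrite ln_inv_pow2 in Hr1, Hr2.
  specialize (HKb ltac:(split; lra)).
  pose proof (Rle_abs (ln (phi t) - ln (phi (1 - / 2 ^ n)))) as A1.
  pose proof (Rle_abs (- (ln (phi t) - ln (phi (1 - / 2 ^ n))))) as A2. rewrite Rabs_Ropp in A2.
  assert (P1 : 0 < phi t) by (apply Hp; lra).
  assert (P2 : 0 < phi (1 - / 2 ^ n)) by (apply Hp; lra).
  split.
  - rewrite <- (exp_ln (phi t)) by auto. rewrite <- (exp_ln (phi (1 - / 2 ^ n))) by auto.
    rewrite <- exp_plus. apply exp_mono. lra.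
  - rewrite <- (exp_ln (phi t)) by auto. rewrite <- (exp_ln (phi (1 - / 2 ^ n))) by auto.
    rewrite <- exp_plus. apply exp_mono. lra.
Qed.

Lemma RInt_one2 a b : RInt (fun _ => 1 ^ 2) a b = b - a.
Proof. rewrite RInt_const. unfold scal; simpl; unfold mult; simpl. ring. Qed.

Lemma sqrt_ge y x : 0 <= y -> y * y <= x -> y <= sqrt x.
Proof. intros. rewrite <- (sqrt_square y) by auto. apply sqrt_le_1_alt; auto. Qed.

Lemma sqrt_le y x : 0 <= y -> x <= y * y -> sqrt x <= y.
Proof. intros. rewrite <- (sqrt_square y) by auto. apply sqrt_le_1_alt; auto. Qed.

Theorem lemma5p9 (phi : R -> R) (rho : R) (c : nat -> R) :
  continuous_on_01 phi ->
  (forall t, 0 <= t < 1 -> 0 < phi t) ->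
  regularly_varying_at1 phi rho ->
  0 < rho ->
  let kappa : R -> R := fun _ => 1 in
  c O = 0 ->
  (forall n, c n < c (S n)) ->
  (forall n, c n < 1) ->
  (forall n, (L2norm_ind (c n) 1 kappa) ^ 2
             = / 2 ^ n * (L2norm_ind 0 1 kappa) ^ 2) ->
  let omega (n : nat) : R :=
    L2norm_ind (c (n - 1)%nat) (c n) kappa * L2norm_ind (c (n - 1)%nat) (c n) phi in
  exists C1 C2 : R, 0 < C1 /\ 0 < C2 /\
    forall n : nat, (1 <= n)%nat ->
      C1 * (/ 2 ^ n * phi (1 - / 2 ^ n)) <= omega n /\
      omega n <= C2 * (/ 2 ^ n * phi (1 - / 2 ^ n)).
Proof.
  intros [Hc H0] Hp Hreg Hrho kappa Hc0 Hinc Hlt1 Hnorm omega.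
  assert (Hcn : forall n, c n = 1 - / 2 ^ n).
  { intros n. specialize (Hnorm n). unfold L2norm_ind, kappa in Hnorm.
    rewrite !RInt_one2, !pow2_sqrt in Hnorm by (try specialize (Hlt1 n); lra). lra. }
  destruct (phi_ratio phi rho Hc H0 Hp Hreg) as [K [HK HR]].
  exists (exp (- K)), (exp K). split. apply exp_pos. split. apply exp_pos.
  intros n Hn. unfold omega, L2norm_ind, kappa. rewrite RInt_one2.
  assert (Hn2 : 2 ^ n = 2 * 2 ^ (n - 1)).
  { destruct n. lia. simpl. replace (n - 0)%nat with n by lia. ring. }
  pose proof (inv_pow2_le1 n) as I1. pose proof (inv_pow2_le1 (n - 1)) as I2.
  assert (Hlen : c n - c (n - 1)%nat = / 2 ^ n).
  { rewrite !Hcn, Hn2. field. apply pow_nonzero; lra. }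
  rewrite Hlen.
  assert (Hab : c (n - 1)%nat < c n) by (pose proof (Hinc (n - 1)%nat) as Hi; replace (S (n - 1)) with n in Hi by lia; exact Hi).
  set (p := phi (1 - / 2 ^ n)).
  assert (Pp : 0 < p) by (apply Hp; lra).
  assert (HRt : forall t, c (n - 1)%nat <= t <= c n -> p * exp (- K) <= phi t <= exp K * p).
  { intros t Ht. rewrite !Hcn in Ht. destruct (HR n Hn t Ht) as [A1 A2]. fold p in A1, A2. split; [|lra].
    rewrite exp_Ropp. apply Rmult_le_reg_r with (exp K). apply exp_pos.
    rewrite Rmult_assoc, Rinv_l by (apply Rgt_not_eq, exp_pos). lra. }
  assert (Hint : ex_RInt (fun t => phi t ^ 2) (c (n - 1)%nat) (c n)).
  { apply ex_RInt_ext with (f := fun t => gext phi t ^ 2).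
    - intros x Hx. rewrite Rmin_left, Rmax_right in Hx by lra.
      rewrite gext_eq; auto. rewrite Hcn in Hx. lra.
    - apply (ex_RInt_continuous (V := R_CompleteNormedModule)). intros z Hz.
      rewrite Rmin_left, Rmax_right in Hz by lra.
      apply continuity_pt_filterlim.
      apply (continuity_pt_comp (gext phi) (fun x => x ^ 2)).
      + apply gext_cont; auto. pose proof (Hlt1 n); lra.
      + apply derivable_continuous_pt, derivable_pt_pow. }
  set (I := RInt (fun t => phi t ^ 2) (c (n - 1)%nat) (c n)).
  assert (Pq : 0 < p * exp (- K)) by (apply Rmult_lt_0_compat; auto; apply exp_pos).
  assert (IL : / 2 ^ n * (p * exp (- K)) ^ 2 <= I).
  { rewrite <- Hlen. rewrite <- (RInt_const (V := R_CompleteNormedModule)) .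
    unfold I. apply RInt_le. lra. apply ex_RInt_const. exact Hint.
    intros x Hx. destruct (HRt x ltac:(lra)) as [h1 h2]. simpl. nra. }
  assert (IU : I <= / 2 ^ n * (exp K * p) ^ 2).
  { rewrite <- Hlen. rewrite <- (RInt_const (V := R_CompleteNormedModule)) .
    unfold I. apply RInt_le. lra. exact Hint. apply ex_RInt_const.
    intros x Hx. destruct (HRt x ltac:(lra)) as [h1 h2]. simpl. nra. }
  set (s := sqrt (/ 2 ^ n)).
  assert (Hs : s * s = / 2 ^ n) by (apply sqrt_sqrt; lra).
  assert (Ps : 0 <= s) by apply sqrt_pos.
  assert (S1 : s * (p * exp (- K)) <= sqrt I).
  { apply sqrt_ge. nra. replace (s * (p * exp (- K)) * (s * (p * exp (- K)))) with
      (s * s * (p * exp (- K)) ^ 2) by ring. rewrite Hs. auto. }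
  assert (S2 : sqrt I <= s * (exp K * p)).
  { apply sqrt_le. pose proof (exp_pos K). apply Rmult_le_pos; [exact Ps|]. left; apply Rmult_lt_0_compat; auto.
    replace (s * (exp K * p) * (s * (exp K * p))) with
      (s * s * (exp K * p) ^ 2) by ring. rewrite Hs. auto. }
  split.
  - replace (exp (- K) * (/ 2 ^ n * p)) with (s * (s * (p * exp (- K)))) by (rewrite <- Hs; ring).
    apply Rmult_le_compat_l; auto.
  - replace (exp K * (/ 2 ^ n * p)) with (s * (s * (exp K * p))) by (rewrite <- Hs; ring).
    apply Rmult_le_compat_l; auto.
Qed.
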